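(* Let $A=\{-1,+1\}$, $\sigma\in(0,1)$, and let $P$ be a kernel on $A$ whose probabilistic skeleton $(\tau^\sigma,p)$ with respect to $\tau^\sigma$ satisfies $\inf_{v\in\tau^\sigma}p(1|v)>\sigma$. Then $(\tau^\sigma,p)$ is good, and its good coalescence time $\bar\theta[0]$ has exponential tail.
   Context: A past is $\underline a=\ldots a_{-2}a_{-1}\in A^{-\mathbb N}$; concatenation puts the older part on the left ($\underline z\,v$ is the past ending with the finite string $v$, preceded by $\underline z$). A kernel is $P:A\times A^{-\mathbb N}\to[0,1]$ with $\sum_aP(a|\underline a)=1$; $\alpha(a):=\inf_{\underline z}P(a|\underline z)$, $\alpha_{-1}:=\alpha(-1)+\alpha(1)$. For a past $\underline a$, $T_\sigma(\underline a):=\inf\{k\ge1:\frac1k\sum_{i=1}^k\mathbf 1\{a_{-i}=1\}\ge\sigma\}$ ($=+\infty$ if the set is empty). $\tau^\sigma$ is the set consisting of the finite strings $a_{-T_\sigma(\underline a)}^{-1}$ for pasts with $T_\sigma(\underline a)<\infty$ together with the pasts $\underline a$ with $T_\sigma(\underline a)=\infty$; it is a context tree: every past has exactly one element of $\tau^\sigma$ as suffix, denoted $c_{\tau^\sigma}(\underline a)$. The probabilistic skeleton is $(\tau^\sigma,p)$ with $p(a|v):=\inf_{\underline z}P(a|\underline z v)$ for finite $v\in\tau^\sigma$ and $p(a|v):=P(a|v)$ for infinite $v$. $\mathbf U=(U_i)_{i\in\mathbb Z}$ i.i.d. uniform on $[0,1)$. With $A$ enumerated in a fixed order $a^{(1)},a^{(2)}$,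 $Y_i:=a^{(1)}$ if $U_i<\alpha(a^{(1)})$, $Y_i:=a^{(2)}$ if $\alpha(a^{(1)})\le U_i<\alpha_{-1}$, $Y_i:=\star$ if $U_i\ge\alpha_{-1}$. For $\mathbf a\in A^{\mathbb Z}$, $Y_i(\mathbf a):=Y_i$ if $Y_i\in A$, else $a_i$. $c^n_\tau:=\sup_{\mathbf a}|c_{\tau^\sigma}(\ldots Y_{n-1}(\mathbf a)Y_n(\mathbf a))|$. $\bar\theta[m]:=\sup\{i\le m:\forall j\in\{i,\dots,m\},\ Y_j\in A\text{ or }c^j_\tau\le j-i\}$ (sup of empty set $=-\infty$) is the good coalescence time; $(\tau^\sigma,p)$ is good if $\mathbb E|\bar\theta[0]|<\infty$. Exponential tail: $\mathbb P(|W|\ge n)\le Dd^n$ for some $D>0$, $0<d<1$. *)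

(* Defs.v *)
From HB Require Import structures.
From mathcomp Require Import all_boot all_order all_algebra.
From mathcomp Require Import all_classical all_reals all_analysis measurable_realfun.
Set Implicit Arguments. Unset Strict Implicit. Unset Printing Implicit Defensive.
Import Order.TTheory GRing.Theory Num.Theory.
Import numFieldNormedType.Exports.
Local Open Scope classical_set_scope.
Local Open Scope ring_scope.

Inductive sgn := Minus | Plus.

Definition other (a : sgn) : sgn := if a is Plus then Minus else Plus.

(** Pasts: a past  ... a_{-2} a_{-1}  is represented as  b : nat -> sgn
    with  b k = a_{-(k+1)}  (b 0 is the most recent symbol). *)
Definition past := nat -> sgn.

(** A finite string v = a_{-n} ... a_{-1} is represented as a seq listed
    from the most recent symbol backwards: [:: a_{-1}; a_{-2}; ...; a_{-n}].
    [cat_past z v] is the past  z v  (z older, v the most recent part). *)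
Definition cat_past (z : past) (v : seq sgn) : past :=
  fun k => if (k < size v)%N then nth Plus v k else z (k - size v)%N.

Section Defs.
Variable R : realType.

Definition is_kernel (P : sgn -> past -> R) : Prop :=
  (forall a z, 0 <= P a z <= 1) /\ (forall z, P Minus z + P Plus z = 1).

Definition alpha (P : sgn -> past -> R) (a : sgn) : R := inf (range (P a)).
Definition alpha_m1 (P : sgn -> past -> R) : R := alpha P Minus + alpha P Plus.

Definition ind_plus (s : sgn) : R := if s is Plus then 1 else 0.

Definition Tsig (sigma : R) (b : past) : \bar R :=
  ereal_inf [set (k%:R)%:E | k in
     [set k : nat | (0 < k)%N /\ sigma <= (\sum_(i < k) ind_plus (b i)) / k%:R]].

(** Elements of the context tree tau^sigma: finite strings or infinite pasts. *)
Inductive ctx := Fin of seq sgn | Inf of past.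

Definition in_tau (sigma : R) (v : ctx) : Prop :=
  match v with
  | Fin w => exists b : past, Tsig sigma b = ((size w)%:R)%:E /\ w = mkseq b (size w)
  | Inf b => Tsig sigma b = +oo%E
  end.

Definition pskel (P : sgn -> past -> R) (a : sgn) (v : ctx) : R :=
  match v with
  | Fin w => inf (range (fun z => P a (cat_past z w)))
  | Inf b => P a b
  end.

Variables (d : measure_display) (Omega : measurableType d).

(** Y_i in A + {star} (None = star), with a1 the first element of A *)
Definition Yv (P : sgn -> past -> R) (a1 : sgn) (U : int -> Omega -> R)
    (i : int) (w : Omega) : option sgn :=
  if U i w < alpha P a1 then Some a1
  else if U i w < alpha_m1 P then Some (other a1)
  else None.

Definition Ya P a1 U (i : int) w (a : int -> sgn) : sgn :=
  if Yv P a1 U i w is Some s then s else a i.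

Definition pastY P a1 U (n : int) w (a : int -> sgn) : past :=
  fun k => Ya P a1 U (n - k%:Z) w a.

(** c^n_tau = sup_a |c_{tau^sigma}(... Y_{n-1}(a) Y_n(a))|; the length of the
    context c_{tau^sigma}(b) is T_sigma(b) (+oo for infinite contexts). *)
Definition cn P a1 U (sigma : R) (n : int) w : \bar R :=
  ereal_sup [set Tsig sigma (pastY P a1 U n w a) | a in [set: int -> sgn]].

(** good coalescence time theta[m] (as an extended real; -oo for sup of empty set) *)
Definition theta P a1 U sigma (m : int) (w : Omega) : \bar R :=
  ereal_sup [set ((i%:~R : R))%:E | i in
    [set i : int | (i <= m)%R /\
       forall j : int, (i <= j)%R -> (j <= m)%R ->
         Yv P a1 U j w <> None \/ (cn P a1 U sigma j w <= ((j - i)%:~R : R)%:E)%E]].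

Definition iid_uniform (Pr : probability Omega R) (U : int -> Omega -> R) : Prop :=
  (forall i, measurable_fun setT (U i)) /\
  (forall i (B : set R), measurable B ->
      Pr (U i @^-1` B) = lebesgue_measure (B `&` `[0%R, 1%R[)) /\
  (forall (s : seq int) (B : int -> set R), uniq s -> (forall i, measurable (B i)) ->
      Pr (\big[setI/setT]_(i <- s) (U i @^-1` B i))
      = (\prod_(i <- s) Pr (U i @^-1` B i))%E).

End Defs.

(* Main.v *)
Require Import Defs.
From HB Require Import structures.
From mathcomp Require Import all_boot all_order all_algebra.
From mathcomp Require Import all_classical all_reals all_analysis measurable_realfun.
From mathcomp Require Import ring lra zify.
Import Order.TTheory GRing.Theory Num.Theory.
Import numFieldNormedType.Exports.
Local Open Scope classical_set_scope.
Local Open Scope ring_scope.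

Section Comb.
Variable R : realType.
Variables sigma p m : R.

Definition ip (c : option sgn) : R := if c is Some Plus then 1 else 0.
Definition step (h : R) (c : option sgn) : R :=
  if c is Some Plus then (if h - (1 - sigma) <= 0 then 0 else h - (1 - sigma))
  else h + sigma.
Definition stf (s : R * bool) (c : option sgn) : R * bool :=
  (step s.1 c, s.2 && ((s.1 != 0) || (if c is None then true else false))).
Definition st (y : seq (option sgn)) := foldl stf (0, true) y.
Definition wc (c : option sgn) : R :=
  match c with Some Plus => p | Some Minus => m | None => 1 - p - m end.
Definition W (y : seq (option sgn)) : R := \prod_(c <- y) wc c.
Fixpoint SumR (n : nat) (F : seq (option sgn) -> R) : R :=
  match n with
  | 0 => F [::]
  | n'.+1 => SumR n' (fun y => F (rcons y None) + F (rcons y (Some Minus))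
                               + F (rcons y (Some Plus)))
  end.

Lemma SumR_le n F G : (forall y, size y = n -> F y <= G y) -> SumR n F <= SumR n G.
Proof.
elim: n F G => [|n IH] F G H /=; first by apply: H.
apply: IH => y sy; (apply: lerD; [apply: lerD|]); apply: H; by rewrite size_rcons sy.
Qed.

Lemma SumR_scale n c F : SumR n (fun y => c * F y) = c * SumR n F.
Proof.
elim: n F => [|n IH] F //=; rewrite -IH; congr SumR; apply: funext => y.
by rewrite !mulrDr.
Qed.

Hypothesis s0 : 0 < sigma.
Hypothesis s1 : sigma < 1.
Hypothesis sp : sigma < p.
Hypothesis m0 : 0 <= m.
Hypothesis pm1 : p + m <= 1.
Ltac hyps := have ? := s0; have ? := s1; have ? := sp; have ? := m0; have ? := pm1.

Lemma step_ge0 h c : 0 <= h -> 0 <= step h c.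
Proof.
hyps.
move=> h0; rewrite /step; case: c => [[]|] /=; try lra.
by case: ifP => [_|/negbT]; [rewrite lexx | rewrite -ltNge => ?; lra].
Qed.

Lemma step_ge h c : 0 <= h -> h + sigma - ip c <= step h c.
Proof.
hyps.
move=> h0; rewrite /step /ip; case: c => [[]|] /=; try lra.
by case: ifP => H; lra.
Qed.

Lemma st_rcons y c : st (rcons y c) = stf (st y) c.
Proof. by rewrite /st foldl_rcons. Qed.

Lemma st_ge0 y : 0 <= (st y).1.
Proof.
hyps.
elim/last_ind: y => [|y c IH]; first by rewrite /st /=.
by rewrite st_rcons /=; apply: step_ge0.
Qed.

Lemma wc_ge0 c : 0 <= wc c.
Proof. hyps; by case: c => [[]|] /=; lra. Qed.

Lemma W_ge0 y : 0 <= W y.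
Proof. by apply: prodr_ge0 => c _; apply: wc_ge0. Qed.

Lemma W_rcons y c : W (rcons y c) = W y * wc c.
Proof. by rewrite /W big_rcons. Qed.

Definition qq := 1 - p - m.
Definition th := Num.min (p * (p + m)) (p - sigma) / 2.
Definition EE := expR (th * sigma).
Definition EE' := expR (- (th * (1 - sigma))).
Definition aa := (qq * EE + (1 - (1 - p) * EE) / p) / 2.
Definition rho := Num.max (qq * EE / aa)
   (Num.max (p * aa + (1 - p) * EE) (p * EE' + (1 - p) * EE)).
Definition ff (h : R) := if h <= 0 then aa else expR (th * h).

Lemma p_gt0 : 0 < p. Proof. hyps; lra. Qed.

Lemma th_facts : [/\ 0 < th, th < p * (p + m) & th < p - sigma].
Proof.
hyps.
have hp := p_gt0.
have h1 : 0 < p * (p + m) by apply: mulr_gt0; lra.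
rewrite /th; set mi := Num.min (p * (p + m)) (p - sigma).
have hmi : 0 < mi by rewrite lt_min h1 /=; lra.
have hm1 : mi <= p * (p + m) by rewrite ge_min lexx.
have hm2 : mi <= p - sigma by rewrite ge_min lexx orbT.
split; lra.
Qed.

Lemma EE_facts : [/\ 0 < EE, 1 <= EE & EE * (1 - th * sigma) <= 1].
Proof.
hyps.
have [t0 _ _] := th_facts.
have e0 : 0 < EE by apply: expR_gt0.
split => //.
  by have := expR_ge1Dx (th * sigma); rewrite -/EE; nra.
have := expR_ge1Dx (- (th * sigma)); rewrite expRN -/EE => h.
have : (1 + - (th * sigma)) * EE <= EE^-1 * EE by apply: ler_wpM2r => //; lra.
by rewrite mulVf ?gt_eqF //; lra.
Qed.

Lemma EE'_facts : [/\ 0 < EE' & EE' * (1 + th * (1 - sigma)) <= 1].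
Proof.
hyps.
have [t0 _ _] := th_facts.
have e0 : 0 < EE' by apply: expR_gt0.
split => //.
have := expR_ge1Dx (th * (1 - sigma)) => h.
have : EE' * (1 + th * (1 - sigma)) <= EE' * expR (th * (1 - sigma)).
  by apply: ler_wpM2l; lra.
by rewrite /EE' expRN mulVf ?gt_eqF ?expR_gt0.
Qed.

Lemma K1 : qq * EE < (1 - (1 - p) * EE) / p.
Proof.
hyps.
have hp := p_gt0.
have [t0 t1 t2] := th_facts.
have [e0 e1 e2] := EE_facts.
rewrite ltr_pdivlMr //.
have h3 : th * sigma < th by nra.
have h4 : EE * (p * (p + m) - th * sigma) > 0 by apply: mulr_gt0; lra.
rewrite /qq; nra.
Qed.

Lemma K2 : p * EE' + (1 - p) * EE < 1.
Proof.
hyps.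
have hp := p_gt0.
have [t0 t1 t2] := th_facts.
have [e0 e1 e2] := EE_facts.
have [f0 f2] := EE'_facts.
set x := th * sigma in e2 *; set y := th * (1 - sigma) in f2 *.
have x1 : x < 1 by rewrite /x; nra.
have y0 : 0 < y by rewrite /y; apply: mulr_gt0; lra.
have hz : th * sigma * (1 - sigma) < p - sigma.
  have : sigma * (1 - sigma) < 1 by nra.
  nra.
have key : p * (1 - x) + (1 - p) * (1 + y) < (1 + y) * (1 - x).
  have hh : 0 < th * ((p - sigma) - th * sigma * (1 - sigma)) by apply: mulr_gt0 => //; lra.
  rewrite /x /y; nra.
have A1 : p * (EE' * (1 + y)) * (1 - x) <= p * (1 - x).
  have pa : 0 <= p * (1 - x) by apply: mulr_ge0; lra.
  have pb : 0 <= 1 - EE' * (1 + y) by lra.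
  have := mulr_ge0 pa pb; nra.
have B1 : (1 - p) * (EE * (1 - x)) * (1 + y) <= (1 - p) * (1 + y).
  have pa : 0 <= (1 - p) * (1 + y) by apply: mulr_ge0; lra.
  have pb : 0 <= 1 - EE * (1 - x) by lra.
  have := mulr_ge0 pa pb; nra.
have pos : 0 < (1 + y) * (1 - x) by apply: mulr_gt0; lra.
rewrite -(ltr_pM2r pos) mul1r.
have -> : (p * EE' + (1 - p) * EE) * ((1 + y) * (1 - x)) =
  p * (EE' * (1 + y)) * (1 - x) + (1 - p) * (EE * (1 - x)) * (1 + y) by ring.
lra.
Qed.

Lemma aa_facts : [/\ 0 < aa, aa <= 1, qq * EE < aa & p * aa + (1 - p) * EE < 1].
Proof.
hyps.
have hp := p_gt0.
have [e0 e1 e2] := EE_facts.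
have k1 := K1.
have q0 : 0 <= qq by rewrite /qq; lra.
have qe : 0 <= qq * EE by apply: mulr_ge0; lra.
have u1 : (1 - (1 - p) * EE) / p <= 1.
  by rewrite ler_pdivrMr // mul1r; nra.
have u2 : p * ((1 - (1 - p) * EE) / p) = 1 - (1 - p) * EE.
  by rewrite mulrC -mulrA mulVf ?gt_eqF // mulr1.
rewrite /aa; split; try lra.
nra.
Qed.

Lemma rho_facts : 0 < rho /\ rho < 1.
Proof.
hyps.
have hp := p_gt0.
have [e0 e1 e2] := EE_facts.
have [f0 f2] := EE'_facts.
have [a0 a1 a2 a3] := aa_facts.
have k2 := K2.
have q0 : 0 <= qq by rewrite /qq; lra.
split.
  rewrite /rho lt_max; apply/orP; right; rewrite lt_max; apply/orP; right.
  have : 0 < p * EE' by apply: mulr_gt0.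
  have : 0 <= (1 - p) * EE by apply: mulr_ge0; lra.
  lra.
rewrite /rho gt_max; apply/andP; split.
  by rewrite ltr_pdivrMr // mul1r.
by rewrite gt_max; apply/andP; split.
Qed.

Lemma ff_ge h : aa <= ff h.
Proof.
hyps.
have [t0 _ _] := th_facts.
have [_ a1 _ _] := aa_facts.
rewrite /ff; case: ifP => // /negbT; rewrite -ltNge => h0.
have := expR_ge1Dx (th * h); have : 0 < th * h by apply: mulr_gt0.
lra.
Qed.

Definition GG (y : seq (option sgn)) := if (st y).2 then W y * ff (st y).1 else 0.

Lemma GG_step y : GG (rcons y None) + GG (rcons y (Some Minus)) + GG (rcons y (Some Plus))
   <= rho * GG y.
Proof.
hyps.
have hp := p_gt0.
have [t0 t1 t2] := th_facts.
have [e0 e1 e2] := EE_facts.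
have [f0 f2] := EE'_facts.
have [a0 a1 a2 a3] := aa_facts.
have [r0 r1] := rho_facts.
have wy := W_ge0 y.
have hy := st_ge0 y.
rewrite /GG !st_rcons /stf /= !W_rcons.
case: (st y).2 => /=; last by rewrite !addr0 mulr0.
set h := (st y).1 in hy *.
have ffs : ff (h + sigma) = expR (th * h) * EE.
  rewrite /ff ifF; last by apply/negbTE; rewrite -ltNge; lra.
  by rewrite mulrDr expRD.
have q0 : 0 <= qq by rewrite /qq; lra.
case: eqP => [h0|/eqP hn0] /=.
- rewrite h0 add0r addr0 addr0 /ff ifF; last by apply/negbTE; rewrite -ltNge.
  rewrite lexx -/EE.
  have : qq * EE <= rho * aa.
    have : qq * EE / aa <= rho by rewrite /rho le_max lexx.
    by rewrite ler_pdivrMr.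
  rewrite /wc -/qq => hh.
  have := ler_wpM2l wy hh; lra.
- have hpos : 0 < h by rewrite lt_def hn0.
  have ffh : ff h = expR (th * h) by rewrite /ff ifF //; apply/negbTE; rewrite -ltNge.
  rewrite /step ffh ffs /wc -/qq.
  have eh : 1 <= expR (th * h).
    have := expR_ge1Dx (th * h); have : 0 < th * h by apply: mulr_gt0.
    lra.
  case: ifP => hc.
  + rewrite /ff lexx.
    have hr : p * aa + (1 - p) * EE <= rho by rewrite /rho !le_max lexx /= orbT.
    have : qq * (expR (th * h) * EE) + m * (expR (th * h) * EE) + p * aa
           <= rho * expR (th * h).
      have : p * aa <= p * aa * expR (th * h).
        by rewrite -[X in X <= _]mulr1; apply: ler_wpM2l => //; apply: mulr_ge0; lra.
      have : (p * aa + (1 - p) * EE) * expR (th * h) <= rho * expR (th * h).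
        by apply: ler_wpM2r => //; lra.
      rewrite /qq; lra.
    move=> hh; have := ler_wpM2l wy hh; rewrite -mulrA; nra.
  + have hc' : 0 < h - (1 - sigma) by move/negbT: hc; rewrite -ltNge.
    rewrite /ff ifF; last by apply/negbTE; rewrite -ltNge.
    have -> : expR (th * (h - (1 - sigma))) = expR (th * h) * EE'.
      by rewrite -expRD /EE'; congr expR; ring.
    have hr : p * EE' + (1 - p) * EE <= rho by rewrite /rho !le_max lexx /= !orbT.
    have : qq * (expR (th * h) * EE) + m * (expR (th * h) * EE) + p * (expR (th * h) * EE')
           <= rho * expR (th * h).
      have -> : qq * (expR (th * h) * EE) + m * (expR (th * h) * EE) + p * (expR (th * h) * EE')
          = (p * EE' + (1 - p) * EE) * expR (th * h) by rewrite /qq; ring.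
      by apply: ler_wpM2r => //; lra.
    move=> hh; have := ler_wpM2l wy hh; nra.
Qed.

Lemma SumGG n : SumR n GG <= rho ^+ n * aa.
Proof.
hyps.
have [r0 r1] := rho_facts.
elim: n => [|n IH].
  by rewrite /= /GG /st /= /W big_nil mul1r expr0 mul1r /ff lexx.
rewrite /=; apply: (le_trans (SumR_le _ _ (fun y => rho * GG y) _)).
  by move=> y _; apply: GG_step.
rewrite SumR_scale exprS -mulrA; apply: ler_wpM2l => //; lra.
Qed.

Lemma SumBad n : SumR n (fun y => if (st y).2 then W y else 0) <= rho ^+ n.
Proof.
hyps.
have [a0 a1 a2 a3] := aa_facts.
apply: (le_trans (SumR_le _ _ (fun y => aa^-1 * GG y) _)).
  move=> y _; rewrite /GG; case: (st y).2; last by rewrite mulr0.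
  rewrite mulrCA -[X in X <= _]mulr1; apply: ler_wpM2l; first exact: W_ge0.
  by rewrite mulrC ler_pdivlMr // mul1r; exact: ff_ge.
by rewrite SumR_scale mulrC ler_pdivrMr //; exact: SumGG.
Qed.

End Comb.

Section Rec.
Variable R : realType.
Variables sigma : R.
Hypothesis s0 : 0 < sigma.
Lemma step_ge0' h c : 0 <= h -> 0 <= step R sigma h c.
Proof.
move=> h0; have := s0; rewrite /step; case: c => [[]|] /= ?; try lra.
by case: ifP => [_|/negbT]; [rewrite lexx | rewrite -ltNge => ?; lra].
Qed.
Lemma step_ge' h c : h + sigma - ip R c <= step R sigma h c.
Proof.
rewrite /step /ip; case: c => [[]|] /=; try lra.
by case: ifP => H; lra.
Qed.
Lemma st_ge0' y : 0 <= (st R sigma y).1.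
Proof.
elim/last_ind: y => [|y c IH]; first by rewrite /st /=.
by rewrite st_rcons /=; apply: step_ge0'.
Qed.
Lemma st_rec (y : seq (option sgn)) k : (k <= size y)%N -> forall t u, (t + u = k)%N -> (0 < u)%N ->
  sigma * u%:R - \sum_(s < u) ip R (nth None y (t + s)) <= (st R sigma (take k y)).1.
Proof.
elim: k => [|k IH] ky t u tu u0; first by exfalso; move: tu u0; clear; lia.
rewrite (take_nth None) // st_rcons /=.
have h0 := st_ge0' (take k y).
set h := (st R sigma (take k y)).1 in IH h0 *.
apply: (le_trans _ (step_ge' _ _)).
case: u tu u0 => [//|[|u]] tu _.
- rewrite big_ord1 addn0 mulr1; move: tu; rewrite addn1 => -[->]; lra.
- rewrite big_ord_recr /= .
  have tu' : (t + u.+1 = k)%N by move: tu; rewrite addnS => -[].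
  have := IH (ltnW ky) t u.+1 tu' isT.
  rewrite tu' -(addn1 u.+1) natrD; lra.
Qed.

Lemma st_bad y : (st R sigma y).2 = false ->
  exists2 k, (k < size y)%N & ((st R sigma (take k y)).1 = 0) /\ (nth None y k <> None).
Proof.
elim/last_ind: y => [|y c IH] //.
rewrite st_rcons /stf /=.
case hy: (st R sigma y).2 => /=.
- case: eqP => //= h0; case: c => [c'|] //= _.
  exists (size y); first by rewrite size_rcons.
  by rewrite -cats1 takel_cat // take_size nth_cat ltnn subnn.
- have [k ks [hk hn]] := IH hy.
  exists k; first by rewrite size_rcons; apply: ltnW.
  rewrite -cats1 takel_cat; last by apply: ltnW.
  by rewrite nth_cat ks.
Qed.

End Rec.

Section Tsig.
Variable R : realType.
Variable sigma : R.

Definition Sset (b : past) (k : nat) : Prop :=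
  (0 < k)%N /\ sigma <= (\sum_(i < k) ind_plus R (b i)) / k%:R.

Lemma Tsig_le (b : past) (K : nat) :
  (Tsig sigma b <= (K%:R)%:E)%E <-> exists u, (0 < u <= K)%N /\ Sset b u.
Proof.
split; last first.
  move=> [u [/andP [u0 uK] Su]].
  apply: (@le_trans _ _ ((u%:R)%:E)).
    by apply: ereal_inf_lbound; exists u.
  by rewrite lee_fin ler_nat.
move=> H; apply: contrapT => hn; move: H; apply/negP; rewrite -ltNge.
apply: (@lt_le_trans _ _ ((K.+1%:R)%:E)); first by rewrite lte_fin ltr_nat.
apply: le_ereal_inf_tmp => _ [k Sk <-].
rewrite lee_fin ler_nat; case: leqP => // kK; exfalso; apply: hn.
by exists k; split => //; apply/andP; split => //; case: Sk.
Qed.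

Lemma Tsig_cases (b : past) :
  (Tsig sigma b = +oo%E) \/
  exists k, Sset b k /\ Tsig sigma b = ((k%:R)%:E).
Proof.
case: (pselect (exists k, Sset b k)) => [ex|nex]; last first.
  left; rewrite /Tsig.
  apply/eqP; rewrite eq_le leey /=; apply: le_ereal_inf_tmp => x [k Sk _].
  by exfalso; apply: nex; exists k.
right.
have ex' : exists k, `[< Sset b k >] by case: ex => k Sk; exists k; apply/asboolP.
case: (ex_minnP ex') => k /asboolP Sk kmin.
exists k; split => //.
apply/le_anti/andP; split.
  by apply: ereal_inf_lbound; exists k.
apply: le_ereal_inf_tmp => _ [u Su <-].
by rewrite lee_fin ler_nat; apply: kmin; apply/asboolP.
Qed.

Lemma Tsig_mono (b b' : past) (K : nat) :
  (forall i, (i < K)%N -> ind_plus R (b i) <= ind_plus R (b' i)) ->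
  (Tsig sigma b <= (K%:R)%:E)%E -> (Tsig sigma b' <= (K%:R)%:E)%E.
Proof.
move=> hb /Tsig_le [u [/andP [u0 uK] [_ Su]]]; apply/Tsig_le.
exists u; split; first by rewrite u0.
split => //; apply: (le_trans Su); apply: ler_wpM2r; first by rewrite invr_ge0 ler0n.
apply: ler_sum => i _; apply: hb; exact: leq_trans (ltn_ord i) uK.
Qed.

End Tsig.

Section Alpha.
Variable R : realType.
Variable P : sgn -> past -> R.
Hypothesis hk : is_kernel P.

Lemma P_ge0 a z : 0 <= P a z.
Proof. by case: hk => h _; case/andP: (h a z). Qed.

Lemma alpha_ge0 a : 0 <= alpha P a.
Proof.
apply: lb_le_inf; first by exists (P a (fun _ => Plus)), (fun _ => Plus).
by move=> _ [z _ <-]; apply: P_ge0.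
Qed.

Lemma alpha_le a z : alpha P a <= P a z.
Proof.
apply: ge_inf; last by exists z.
by exists 0 => _ [z' _ <-]; apply: P_ge0.
Qed.

Lemma alpha_sum : alpha P Minus + alpha P Plus <= 1.
Proof.
case: hk => _ h; rewrite -(h (fun _ => Plus)).
by apply: lerD; apply: alpha_le.
Qed.

Lemma inf_range_ge0 (F : past -> R) : (forall z, 0 <= F z) -> 0 <= inf (range F).
Proof.
move=> hF; apply: lb_le_inf; first by exists (F (fun _ => Plus)), (fun _ => Plus).
by move=> _ [z _ <-].
Qed.

Lemma pskel_ge0 a v : 0 <= pskel P a v.
Proof.
case: v => [w|b] /=; last exact: P_ge0.
by apply: inf_range_ge0 => z; apply: P_ge0.
Qed.

Variable sigma : R.

Lemma cat_past_mkseq (b : past) k : cat_past (fun i => b (i + k)%N) (mkseq b k) = b.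
Proof.
apply: funext => i; rewrite /cat_past size_mkseq.
case: ltnP => ik; first by rewrite nth_mkseq.
by rewrite subnK.
Qed.

Lemma alpha_plus_gt :
  sigma < inf [set pskel P Plus v | v in in_tau sigma] -> sigma < alpha P Plus.
Proof.
move=> hs; apply: (lt_le_trans hs).
apply: lb_le_inf; first by exists (P Plus (fun _ => Plus)), (fun _ => Plus).
move=> _ [b _ <-].
have hlb : has_lbound [set pskel P Plus v | v in in_tau sigma].
  by exists 0 => _ [v _ <-]; apply: pskel_ge0.
case: (@Tsig_cases R sigma b) => [hinf|[k [Sk hk']]].
  by apply: ge_inf => //; exists (Inf b).
apply: (@le_trans _ _ (pskel P Plus (Fin (mkseq b k)))).
  apply: ge_inf => //; exists (Fin (mkseq b k)) => //=.
  by exists b; rewrite size_mkseq; split.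
rewrite /=; apply: ge_inf.
  by exists 0 => _ [z _ <-]; apply: P_ge0.
by exists (fun i => b (i + k)%N) => //; rewrite cat_past_mkseq.
Qed.

End Alpha.

Definition sgn_eqb (s t : sgn) : bool :=
  match s, t with Plus, Plus | Minus, Minus => true | _, _ => false end.
Lemma sgn_eqbP : Equality.axiom sgn_eqb.
Proof. by case; case; constructor. Qed.
HB.instance Definition _ := hasDecEq.Build sgn sgn_eqbP.

Fixpoint UnionP {T : Type} n (S : seq (option sgn) -> set T) : set T :=
  match n with
  | 0 => S [::]
  | n'.+1 => UnionP n' (fun y => S (rcons y None) `|` S (rcons y (Some Minus))
                               `|` S (rcons y (Some Plus)))
  end.

Lemma UnionP_mem (T : Type) n S y (w : T) : size y = n -> S y w -> UnionP n S w.
Proof.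
elim: n S y => [|n IH] S y.
  by move/size0nil => -> /=.
case/lastP: y => [|y c]; first by case.
rewrite size_rcons => -[sy] Sw /=.
apply: (IH _ y sy); case: c Sw => [[]|] Sw; [by left; right | by right | by left; left].
Qed.

Fixpoint SumE {R : realType} n (F : seq (option sgn) -> \bar R) : \bar R :=
  match n with
  | 0 => F [::]
  | n'.+1 => SumE n' (fun y => F (rcons y None) + F (rcons y (Some Minus))
                               + F (rcons y (Some Plus)))%E
  end.

Lemma SumE_EFin (R : realType) n (F : seq (option sgn) -> R) :
  SumE n (fun y => (F y)%:E) = (SumR R n F)%:E.
Proof.
by elim: n F => [|n IH] F //=; rewrite -IH; congr SumE.
Qed.

Lemma SumE_le (R : realType) n (F G : seq (option sgn) -> \bar R) :
  (forall y, size y = n -> (F y <= G y)%E) -> (SumE n F <= SumE n G)%E.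
Proof.
elim: n F G => [|n IH] F G H /=; first by apply: H.
apply: IH => y sy; (apply: leeD; [apply: leeD|]); apply: H; by rewrite size_rcons sy.
Qed.

Lemma bigsetI_mem (T : Type) (I : eqType) (s : seq I) (F : I -> set T) w :
  (\big[setI/setT]_(i <- s) F i) w <-> (forall i, i \in s -> F i w).
Proof.
elim: s => [|i s IH]; rewrite ?big_nil ?big_cons; first by split.
split.
  move=> [Fi /IH H] j; rewrite inE => /orP [/eqP ->|js] //; exact: H.
move=> H; split; first by apply: H; rewrite inE eqxx.
by apply/IH => j js; apply: H; rewrite inE js orbT.
Qed.


Section Prob.
Variables (R : realType) (d : measure_display) (Omega : measurableType d).
Variables (Pr : probability Omega R) (U : int -> Omega -> R) (a1 : sgn).
Variables (P : sgn -> past -> R) (sigma : R).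
Hypothesis hU : iid_uniform Pr U.
Hypothesis hk : is_kernel P.

Definition patt n w := [seq Yv P a1 U (- (k%:Z)) w | k <- iota 0 n].

Lemma patt_rcons n w : patt n.+1 w = rcons (patt n w) (Yv P a1 U (- (n%:Z)) w).
Proof. by rewrite /patt -addn1 iotaD map_cat /= cats1. Qed.

Lemma size_patt n w : size (patt n w) = n.
Proof. by rewrite size_map size_iota. Qed.

Lemma nth_patt n w k : (k < n)%N -> nth None (patt n w) k = Yv P a1 U (- (k%:Z)) w.
Proof. by move=> kn; rewrite (nth_map 0%N) ?size_iota // nth_iota. Qed.

Definition Bc (c : option sgn) : set R :=
  match c with
  | Some s => if sgn_eqb s a1 then [set x | x < alpha P a1]
              else [set x | alpha P a1 <= x /\ x < alpha_m1 P]
  | None => [set x | alpha_m1 P <= x]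
  end.

Lemma alpha_facts : [/\ 0 <= alpha P a1, alpha P a1 <= alpha_m1 P & alpha_m1 P <= 1].
Proof.
have h0 := @alpha_ge0 R P hk; have h1 := @alpha_sum R P hk.
have := h0 Minus; have := h0 Plus.
rewrite /alpha_m1; case: a1 => ? ?; split => //; lra.
Qed.

Lemma Yv_preP i c w : Yv P a1 U i w = c <-> Bc c (U i w).
Proof.
have [h0 h1 h2] := alpha_facts.
rewrite /Yv /Bc.
case: (ltP (U i w) (alpha P a1)) => u1; case: (ltP (U i w) (alpha_m1 P)) => u2;
  case: c => [s|]; case: a1 u1 u2 h0 h1 h2 => u1 u2 h0 h1 h2; try case: s => /=;
  first [ by split
        | split; [by move=> H; inversion H | move=> H; exfalso; lra]
        | split; [by move=> H; inversion H | case => ? ?; exfalso; lra]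
        | split; [by move=> H; inversion H | rewrite /= => ?; exfalso; lra] ].
Qed.

Lemma Bc_meas c : measurable (Bc c).
Proof.
case: c => [s|] /=; [case: ifP => _|].
- rewrite (_ : [set x | x < alpha P a1] = [set` `]-oo, alpha P a1[]); first exact: measurable_itv.
  by apply: funext => x; apply: propext; rewrite /= in_itv.
- rewrite (_ : [set x | alpha P a1 <= x /\ x < alpha_m1 P] = [set` `[alpha P a1, alpha_m1 P[]).
    exact: measurable_itv.
  apply: funext => x; apply: propext; rewrite /= in_itv /=; split.
    by move=> [-> ->].
  by move/andP.
- rewrite (_ : [set x | alpha_m1 P <= x] = [set` `[alpha_m1 P, +oo[]); first exact: measurable_itv.
  by apply: funext => x; apply: propext; rewrite /= in_itv /= andbT.
Qed.

Lemma Yv_meas i c : measurable [set w | Yv P a1 U i w = c].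
Proof.
have -> : [set w | Yv P a1 U i w = c] = U i @^-1` Bc c.
  by apply: funext => w; apply: propext; exact: Yv_preP.
by have := (hU.1 i) measurableT (Bc c) (Bc_meas c); rewrite setTI.
Qed.

End Prob.

Lemma leb_co (R : realType) (B : set R) (lo hi v : R) : 0 <= lo -> lo <= hi -> hi <= 1 ->
  (forall x, 0 <= x -> x < 1 -> (B x <-> lo <= x /\ x < hi)) -> v = hi - lo ->
  lebesgue_measure (B `&` `[0%R, 1%R[) = v%:E.
Proof.
move=> l0 lh h1 HB ->.
have -> : B `&` `[0%R, 1%R[ = [set` `[lo, hi[].
  apply: funext => x; apply: propext; rewrite /= !in_itv /=; split.
    move=> [Bx /andP [x0 x1]]; have [h h'] := (HB x x0 x1).1 Bx.
    by apply/andP; split.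
  move=> /andP [h h']; have x0 : 0 <= x by lra.
  have x1 : x < 1 by lra.
  split; last by rewrite x0 x1.
  by apply/(HB x x0 x1); split.
rewrite lebesgue_measure_itv /=; case: ifPn => hl; first by rewrite -EFinD.
move: hl; rewrite lte_fin -leNgt => hl.
have -> : hi = lo by apply: le_anti; rewrite hl lh.
by rewrite subrr.
Qed.

Section Prob2.
Variables (R : realType) (d : measure_display) (Omega : measurableType d).
Variables (Pr : probability Omega R) (U : int -> Omega -> R) (a1 : sgn).
Variables (P : sgn -> past -> R) (sigma : R).
Hypothesis hU : iid_uniform Pr U.
Hypothesis hk : is_kernel P.

Local Notation patt := (patt R d Omega U a1 P).
Local Notation Bc := (Bc R a1 P).
Local Notation wcP := (wc R (alpha P Plus) (alpha P Minus)).

Lemma Pr_Bc i c : Pr (U i @^-1` Bc c) = (wcP c)%:E.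
Proof.
rewrite (hU.2.1 i _ (Bc_meas _ _ _ c)).
have h0 := @alpha_ge0 R P hk; have h1 := @alpha_sum R P hk.
have hM := h0 Minus; have hP := h0 Plus.
case: c => [s|]; [case: s; case: a1|]; rewrite /Bc /=.
- apply: (@leb_co _ _ 0 (alpha P Minus)); rewrite /alpha_m1; [lra|lra|lra| |lra].
  by move=> x x0 x1 /=; split; [move=> ?; split; lra | case => ? ?; lra].
- apply: (@leb_co _ _ (alpha P Plus) (alpha_m1 P)); rewrite /alpha_m1; [lra|lra|lra| |lra].
  by move=> x x0 x1 /=; split; case => ? ?; split; lra.
- apply: (@leb_co _ _ (alpha P Minus) (alpha_m1 P)); rewrite /alpha_m1; [lra|lra|lra| |lra].
  by move=> x x0 x1 /=; split; case => ? ?; split; lra.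
- apply: (@leb_co _ _ 0 (alpha P Plus)); rewrite /alpha_m1; [lra|lra|lra| |lra].
  by move=> x x0 x1 /=; split; [move=> ?; split; lra | case => ? ?; lra].
- apply: (@leb_co _ _ (alpha_m1 P) 1); rewrite /alpha_m1; [lra|lra|lra| |lra].
  by move=> x x0 x1 /=; split; [move=> ?; split; lra | case => ? ?; lra].
Qed.

End Prob2.

Section Prob3.
Variables (R : realType) (d : measure_display) (Omega : measurableType d).
Variables (Pr : probability Omega R) (U : int -> Omega -> R) (a1 : sgn).
Variables (P : sgn -> past -> R) (sigma : R).
Hypothesis hU : iid_uniform Pr U.
Hypothesis hk : is_kernel P.

Local Notation patt := (patt R d Omega U a1 P).
Local Notation Bc := (Bc R a1 P).
Local Notation wcP := (wc R (alpha P Plus) (alpha P Minus)).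
Local Notation Y := (Yv P a1 U).

Lemma Pr_cyl y : Pr [set w | patt (size y) w = y] = (W R (alpha P Plus) (alpha P Minus) y)%:E.
Proof.
set n := size y.
pose s := [seq - (k%:Z) | k <- iota 0 n].
pose B := fun i : int => Bc (nth None y `|i|%N).
have us : uniq s.
  rewrite map_inj_uniq ?iota_uniq // => k1 k2 /eqP; rewrite eqr_opp => /eqP [] //.
have mB : forall i, measurable (B i) by move=> i; apply: Bc_meas.
have E1 : [set w | patt n w = y] = \big[setI/setT]_(i <- s) (U i @^-1` B i).
  apply: funext => w; apply: propext; rewrite bigsetI_mem; split.
    move=> hw i /mapP [k]; rewrite mem_iota add0n => /andP [_ kn] ->.
    rewrite /B /preimage /= abszN absz_nat -hw nth_patt //.
    exact: (@Yv_preP R d Omega U a1 P hk _ _ w).1.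
  move=> H; apply: (@eq_from_nth _ None); first by rewrite size_patt.
  move=> k; rewrite size_patt => kn; rewrite nth_patt //.
  have := H (- (k%:Z)); rewrite /B /preimage /= abszN absz_nat => H'.
  apply: (@Yv_preP R d Omega U a1 P hk _ _ w).2; apply: H'; apply/mapP; exists k => //.
  by rewrite mem_iota add0n kn.
rewrite E1 (hU.2.2 s B us mB) big_map.
rewrite (eq_bigr (fun k => (wcP (nth None y k))%:E)); last first.
  by move=> k _; rewrite /B abszN absz_nat Pr_Bc.
rewrite prodEFin /W (big_nth None) /index_iota subn0.
done.
Qed.

Lemma patt_meas n (g : seq (option sgn) -> Prop) : measurable [set w | g (patt n w)].
Proof.
elim: n g => [|n IH] g.
  case: (pselect (g [::])) => h.
    by rewrite (_ : [set w | _] = setT) //; apply: funext => w; apply: propext; split.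
  by rewrite (_ : [set w | _] = set0) //; apply: funext => w; apply: propext; split.
have -> : [set w | g (patt n.+1 w)] =
  ([set w | g (rcons (patt n w) None)] `&` [set w | Y (- (n%:Z)) w = None]) `|`
  ([set w | g (rcons (patt n w) (Some Minus))] `&` [set w | Y (- (n%:Z)) w = Some Minus]) `|`
  ([set w | g (rcons (patt n w) (Some Plus))] `&` [set w | Y (- (n%:Z)) w = Some Plus]).
  apply: funext => w; apply: propext; rewrite /= patt_rcons.
  case: (Y (- (n%:Z)) w) => [[]|]; split.
  - by move=> ?; left; right.
  - by case => [[[]|[]]|[]].
  - by move=> ?; right.
  - by case => [[[]|[]]|[]].
  - by move=> ?; left; left.
  - by case => [[[]|[]]|[]].
apply: measurableU; first apply: measurableU.
all: apply: measurableI; [exact: (IH (fun z => g (rcons z _))) | exact: (@Yv_meas R d Omega Pr U a1 P hU hk)].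
Qed.

Lemma dep_meas n (A : set Omega) :
  (forall w w', patt n w = patt n w' -> A w -> A w') -> measurable A.
Proof.
move=> H.
have -> : A = [set w | (fun y => exists w', patt n w' = y /\ A w') (patt n w)].
  apply: funext => w; apply: propext; split.
    by move=> Aw; exists w.
  by move=> [w' [e Aw']]; apply: (H w').
exact: (patt_meas n (fun y => exists w', patt n w' = y /\ A w')).
Qed.

Lemma UnionP_meas n (S : seq (option sgn) -> set Omega) :
  (forall y, measurable (S y)) -> measurable (UnionP n S).
Proof.
elim: n S => [|n IH] S hS /=; first exact: hS.
apply: IH => y; apply: measurableU; [apply: measurableU|]; exact: hS.
Qed.

Lemma UnionP_bound n (S : seq (option sgn) -> set Omega) :
  (forall y, measurable (S y)) -> (Pr (UnionP n S) <= SumE n (fun y => Pr (S y)))%E.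
Proof.
elim: n S => [|n IH] S hS /=; first by [].
apply: (le_trans (IH _ _)).
  by move=> y; apply: measurableU; [apply: measurableU|]; exact: hS.
apply: SumE_le => y _.
apply: (le_trans (measureU2 _ _ _)); [apply: measurableU; exact: hS | exact: hS |].
apply: leeD => //; apply: measureU2; exact: hS.
Qed.

Hypotheses (s0 : 0 < sigma) (s1 : sigma < 1) (sp : sigma < alpha P Plus).

Lemma Pr_bad n :
  (Pr [set w | (st R sigma (patt n w)).2] <=
     ((rho R sigma (alpha P Plus) (alpha P Minus)) ^+ n)%:E)%E.
Proof.
have hM := @alpha_ge0 R P hk Minus.
have h1 := @alpha_sum R P hk.
pose S := fun y => if (st R sigma y).2 then [set w | patt (size y) w = y] else set0.
have mS : forall y, measurable (S y).
  move=> y; rewrite /S; case: ifP => _ //.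
  by apply: (patt_meas (size y) (fun z => z = y)).
apply: (@le_trans _ _ (Pr (UnionP n S))).
  apply: le_measure; rewrite ?inE.
  - by apply: (patt_meas n (fun z => (st R sigma z).2)).
  - exact: UnionP_meas.
  - move=> w hw; apply: (@UnionP_mem _ n S (patt n w)); first exact: size_patt.
    by rewrite /S hw size_patt.
apply: (le_trans (UnionP_bound n S mS)).
apply: (@le_trans _ _ (SumE n (fun y => (if (st R sigma y).2 then W R (alpha P Plus) (alpha P Minus) y else 0)%:E))).
  apply: SumE_le => y sy; rewrite /S; case: ifP => _.
    by rewrite Pr_cyl.
  by rewrite measure0.
rewrite SumE_EFin lee_fin.
apply: SumBad => //; lra.
Qed.

End Prob3.

Lemma intrN_nat (R : realType) (k : nat) : ((- (k%:Z))%:~R : R) = - (k%:R).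
Proof. by rewrite mulrNz -pmulrn. Qed.

Lemma intr_nat (R : realType) (k : nat) : (((k%:Z))%:~R : R) = (k%:R).
Proof. by rewrite -pmulrn. Qed.

Section Theta.
Variables (R : realType) (d : measure_display) (Omega : measurableType d).
Variables (Pr : probability Omega R) (U : int -> Omega -> R) (a1 : sgn).
Variables (P : sgn -> past -> R) (sigma : R).
Hypothesis hU : iid_uniform Pr U.
Hypothesis hk : is_kernel P.
Hypothesis s0 : 0 < sigma.

Local Notation patt := (patt R d Omega U a1 P).
Local Notation Y := (Yv P a1 U).

Definition valid (i : int) (w : Omega) : Prop :=
  (i <= 0)%R /\ forall j : int, (i <= j)%R -> (j <= 0)%R ->
     Yv P a1 U j w <> None \/ (cn P a1 U sigma j w <= ((j - i)%:~R : R)%:E)%E.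

Lemma theta_def w : theta P a1 U sigma 0 w =
  ereal_sup [set ((i%:~R : R))%:E | i in [set i | valid i w]].
Proof. by []. Qed.

Lemma cn_le j w (K : nat) : (cn P a1 U sigma j w <= (K%:R)%:E)%E <->
  forall a, (Tsig sigma (pastY P a1 U j w a) <= (K%:R)%:E)%E.
Proof.
split.
  move=> H a; apply: le_trans H; apply: ereal_sup_ubound; by exists a.
by move=> H; apply: ge_ereal_sup => _ [a _ <-].
Qed.

Lemma ip_le (c : option sgn) (s : sgn) :
  ip R c <= ind_plus R (if c is Some s' then s' else s).
Proof. by case: c => [[]|] /=; case: s; rewrite /ind_plus /= ?lexx ?ler01. Qed.

Lemma valid_of_rec n w k : (k < n)%N ->
  (st R sigma (take k (patt n w))).1 = 0 ->
  nth None (patt n w) k <> None -> valid (- (k%:Z)) w.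
Proof.
move=> kn h0 hn; split; first by rewrite oppr_le0.
move=> j hj1 hj2.
set t := `|j|%N.
have [jt tk] : j = - (t%:Z) /\ (t <= k)%N by rewrite /t; split; lia.
case: (eqVneq t k) => [etk|ntk].
  by left; rewrite jt etk -(@nth_patt R d Omega U a1 P n).
right.
have tk' : (t < k)%N by rewrite ltn_neqAle ntk tk.
have e : j - - (k%:Z) = ((k - t)%N)%:Z by rewrite jt; lia.
rewrite e intr_nat; apply/cn_le => a.
apply/Tsig_le; exists (k - t)%N; split; first by rewrite leqnn andbT subn_gt0.
split; first by rewrite subn_gt0.
have u0 : (0 < (k - t)%N%:R :> R) by rewrite ltr0n subn_gt0.
rewrite ler_pdivlMr //.
have := @st_rec R sigma s0 (patt n w) k _ t (k - t)%N _ _.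
rewrite size_patt h0 => /(_ (ltnW kn)); rewrite subnKC // subn_gt0 => /(_ erefl tk').
move=> hrec.
apply: (le_trans _ (ler_sum _ (fun (s : 'I_(k - t)) _ => _ : ip R (nth None (patt n w) (t + s)) <= _))).
  by rewrite mulrC; lra.
move=> s _.
rewrite nth_patt; last by have := ltn_ord s; lia.
rewrite /pastY /Ya.
have -> : j - (s : nat)%:Z = - ((t + s)%N%:Z) by rewrite jt; lia.
exact: ip_le.
Qed.

Lemma theta_le0 w : (theta P a1 U sigma 0 w <= 0)%E.
Proof.
apply: ge_ereal_sup => _ [i [hi _] <-]; by rewrite lee_fin lerz0.
Qed.

Lemma theta_ge w k : valid (- (k%:Z)) w ->
  ((- (k%:R) : R)%:E <= theta P a1 U sigma 0 w)%E.
Proof.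
move=> hv; apply: ereal_sup_ubound; exists (- (k%:Z)) => //.
by rewrite intrN_nat.
Qed.

Lemma tail_sub n : [set w | ((n%:R : R)%:E <= `|theta P a1 U sigma 0 w|)%E] `<=`
   [set w | (st R sigma (patt n w)).2].
Proof.
move=> w /= hw; case E: (st R sigma (patt n w)).2 => //.
have [k kn [hk0 hkn]] := @st_bad R sigma (patt n w) E.
rewrite size_patt in kn.
have hv := @valid_of_rec n w k kn hk0 hkn.
have h1 := @theta_ge w k hv; have h2 := theta_le0 w.
move: hw h1 h2; case: (theta P a1 U sigma 0 w) => [r| |] //= hw h1 h2.
rewrite lee_fin in h1; rewrite lee_fin in h2; rewrite lee_fin ler0_norm // in hw.
have : (n%:R : R) <= k%:R by lra.
by rewrite ler_nat leqNgt kn.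
Qed.

Lemma valid_meas k : measurable [set w | valid (- (k%:Z)) w].
Proof.
apply: (@dep_meas R d Omega Pr U a1 P hU hk k.+1) => w w' e [h0 H]; split => // j hj1 hj2.
set t := `|j|%N.
have [jt tk] : j = - (t%:Z) /\ (t <= k)%N by rewrite /t; split; lia.
have eY : forall u, (u <= k)%N -> Y (- (u%:Z)) w = Y (- (u%:Z)) w'.
  move=> u uk; rewrite -!(@nth_patt R d Omega U a1 P k.+1) //; by rewrite e.
have e' : j - - (k%:Z) = ((k - t)%N)%:Z by rewrite jt; lia.
case: (H j hj1 hj2) => [hn|hc].
  by left; rewrite jt -eY // -jt.
right; move: hc; rewrite e' intr_nat => /cn_le hc; apply/cn_le => a.
apply: (@Tsig_mono R sigma (pastY P a1 U j w a)); last exact: hc.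
move=> i ik; rewrite /pastY /Ya.
have -> : j - i%:Z = - ((t + i)%N%:Z) by rewrite jt; lia.
have hti : (t + i <= k)%N by lia.
by rewrite eY.
Qed.

Definition gk (k : nat) (w : Omega) : \bar R :=
  if `[< valid (- (k%:Z)) w >] then ((- (k%:R) : R)%:E) else -oo%E.

Lemma gk_meas k : measurable_fun setT (gk k).
Proof.
move=> _ B mB; rewrite setTI.
have -> : gk k @^-1` B = ([set w | valid (- (k%:Z)) w] `&` [set _ | B ((- (k%:R) : R)%:E)])
   `|` (~` [set w | valid (- (k%:Z)) w] `&` [set _ | B -oo%E]).
  apply: funext => w; apply: propext; rewrite /gk /preimage /=.
  case: asboolP => h; split.
  - by move=> hb; left.
  - by case => -[].
  - by move=> hb; right.
  - by case => -[].
have mc : forall (Q : Prop), measurable [set _ : Omega | Q].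
  move=> Q; case: (pselect Q) => hQ.
    by rewrite (_ : [set _ | Q] = setT) //; apply: funext => w; apply: propext.
  by rewrite (_ : [set _ | Q] = set0) //; apply: funext => w; apply: propext.
apply: measurableU; apply: measurableI => //; last first.
  by apply: measurableC; apply: valid_meas.
exact: valid_meas.
Qed.

Lemma theta_esups : (theta P a1 U sigma 0 : Omega -> \bar R) = fun w => esups (fun k => gk k w) 0.
Proof.
apply: funext => w; rewrite /esups /= /sdrop.
apply/le_anti/andP; split.
  apply: ge_ereal_sup => _ [i [hi hv] <-].
  set k := `|i|%N.
  have ik : i = - (k%:Z) by rewrite /k; lia.
  apply: ereal_sup_ubound; exists k => //.
  rewrite /gk; case: asboolP => hv'; first by rewrite ik intrN_nat.
  by exfalso; apply: hv'; rewrite -ik; exact: (conj hi hv).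
apply: ge_ereal_sup => _ [k _ <-]; rewrite /gk; case: asboolP => h //.
  exact: theta_ge.
exact: leNye.
Qed.

Lemma theta_meas : measurable_fun [set: Omega] (theta P a1 U sigma 0 : Omega -> \bar R).
Proof.
rewrite theta_esups.
by apply: (@measurable_fun_esups _ _ R setT (fun k w => gk k w)) => k; apply: gk_meas.
Qed.

End Theta.

Lemma geom_bound (R : realType) (r : R) : 0 <= r < 1 ->
  (\sum_(n <oo) ((r ^+ n)%:E) <= ((1 - r)^-1)%:E)%E.
Proof.
move=> /andP [r0 r1].
have h0 : forall n, (0 <= n)%N -> true -> (0%R <= ((r ^+ n)%:E))%E.
  by move=> n _ _; rewrite lee_fin exprn_ge0.
move: h0 => /ereal_nondecreasing_series/ereal_nondecreasing_cvgn/cvg_lim -> //.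
apply: ge_ereal_sup => _ [n _ <-] /=.
rewrite sumEFin lee_fin.
have pos : 0 < 1 - r by lra.
rewrite -[(1 - r)^-1]mul1r ler_pdivlMr // mulrC.
have -> : (1 - r) * \sum_(0 <= i < n) r ^+ i = 1 - r ^+ n.
  elim: n => [|n IH]; first by rewrite big_geq // mulr0 expr0 subrr.
  rewrite big_nat_recr //= mulrDr IH exprS; ring.
have : 0 <= r ^+ n by apply: exprn_ge0.
lra.
Qed.

Lemma int_tail d (Omega : measurableType d) (R : realType) (Pr : probability Omega R)
  (T : Omega -> \bar R) (r : R) :
  measurable_fun setT T -> (forall w, (0 <= T w)%E) -> 0 <= r < 1 ->
  (forall n : nat, (Pr [set w | ((n%:R : R)%:E <= T w)%E] <= (r ^+ n)%:E)%E) ->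
  (\int[Pr]_w T w < +oo)%E.
Proof.
move=> mT T0 hr hP.
pose A n := [set w | ((n%:R : R)%:E <= T w)%E].
have mA : forall n, measurable (A n).
  by move=> n; have := emeasurable_fun_c_infty measurableT mT ((n%:R)%:E); rewrite setTI.
have mI : forall n : nat, measurable_fun setT (fun w => (indic (A n) w : R)%:E).
  by move=> n; exact: (proj2 (measurable_EFinP setT (indic (A n) : Omega -> R)) (measurable_indic (mA n))).
have I0 : forall (n : nat) w, setT w -> (0 <= (indic (A n) w : R)%:E)%E.
  by move=> n w _; rewrite lee_fin indicE; case: (w \in A n).
have key : forall w, (T w <= \sum_(n <oo) (indic (A n) w : R)%:E)%E.
  move=> w.
  have ps : forall N : nat, ((N%:R : R)%:E <= T w)%E ->
      (((N.+1)%:R : R)%:E <= \sum_(n <oo) (indic (A n) w : R)%:E)%E.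
    move=> N hN.
    apply: (le_trans _ (nneseries_lim_ge N.+1 _)); last by move=> n _ _; apply: I0.
    rewrite (eq_big_nat _ _ (F2 := fun _ => (1%R)%:E)); last first.
      move=> i /andP [_ iN]; rewrite indicE mem_set //.
      by apply: le_trans hN; rewrite lee_fin ler_nat -ltnS.
    by rewrite sumEFin sumr_const_nat subn0 lee_fin.
  have S0 : (0 <= \sum_(n <oo) (indic (A n) w : R)%:E)%E.
    by apply: nneseries_ge0 => n _ _; apply: I0.
  move: (T0 w) (ps) S0; case: (T w) => [t| |] //= t0 ps' S0.
  - have tt := trunc_itv t0; case/andP: tt => ht1 ht2.
    apply: (le_trans _ (ps' (Num.trunc t) _)); first by rewrite lee_fin ltW.
    by rewrite lee_fin.
  - move: (ps') S0; case: (\sum_(n <oo) (indic (A n) w : R)%:E)%E => [s| |] //= ps'' s0.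
    rewrite lee_fin in s0.
    have := trunc_itv s0; case/andP => _ hs.
    have := ps'' (Num.trunc s) (leey _); rewrite lee_fin => h.
    by have := lt_le_trans hs h; rewrite ltxx.
apply: (@le_lt_trans _ _ (\int[Pr]_w (\sum_(n <oo) (indic (A n) w : R)%:E))%E).
  apply: ge0_le_integral.
  - exact: measurableT.
  - by move=> w _; apply: T0.
  - exact: mT.
  - exact: (ge0_emeasurable_sum (P := predT)).
  - by move=> w _; apply: key.
rewrite integral_nneseries //.
apply: (@le_lt_trans _ _ (\sum_(n <oo) ((r ^+ n)%:E))%E).
  apply: lee_nneseries.
    by move=> n _ _; apply: integral_ge0 => w _; apply: I0.
  move=> n _; rewrite integral_indic // setIT; exact: hP.
apply: (le_lt_trans (@geom_bound R r hr)); exact: ltry.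
Qed.

Theorem mainTheorem7 (R : realType) (d : measure_display) (Omega : measurableType d)
  (Pr : probability Omega R) (U : int -> Omega -> R) (a1 : sgn)
  (P : sgn -> past -> R) (sigma : R) :
  iid_uniform Pr U ->
  0 < sigma < 1 ->
  is_kernel P ->
  sigma < inf [set pskel P Plus v | v in in_tau sigma] ->
  (* (tau^sigma, p) is good *)
  (measurable_fun [set: Omega] (theta P a1 U sigma 0 : Omega -> \bar R) /\
   (\int[Pr]_w `|theta P a1 U sigma 0 w| < +oo)%E) /\
  (* theta[0] has exponential tail *)
  (exists D dd : R, 0 < D /\ 0 < dd < 1 /\
     forall n : nat,
       (Pr [set w | ((n%:R : R)%:E <= `|theta P a1 U sigma 0 w|)%E]
        <= (D * dd ^+ n)%:E)%E).
Proof.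
move=> hU /andP [s0 s1] hk hinf.
have sp := @alpha_plus_gt R P hk sigma hinf.
have hM := @alpha_ge0 R P hk Minus.
have h1 := @alpha_sum R P hk.
have pm1 : alpha P Plus + alpha P Minus <= 1 by lra.
have [r0 r1] := @rho_facts R sigma (alpha P Plus) (alpha P Minus) s0 s1 sp hM pm1.
have mth := @theta_meas R d Omega Pr U a1 P sigma hU hk s0.
have mab : measurable_fun [set: Omega] (fun w => `|theta P a1 U sigma 0 w|%E).
  exact: (measurableT_comp (@abse_measurable R setT) mth).
have tail : forall n : nat,
   (Pr [set w | ((n%:R : R)%:E <= `|theta P a1 U sigma 0 w|)%E]
     <= ((rho R sigma (alpha P Plus) (alpha P Minus)) ^+ n)%:E)%E.
  move=> n; apply: (le_trans _ (@Pr_bad R d Omega Pr U a1 P sigma hU hk s0 s1 sp n)).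
  apply: le_measure; rewrite ?inE.
  - by have := emeasurable_fun_c_infty measurableT mab ((n%:R)%:E); rewrite setTI.
  - exact: (@patt_meas R d Omega Pr U a1 P hU hk n (fun z => (st R sigma z).2)).
  - exact: (@tail_sub R d Omega U a1 P sigma s0 n).
split; [split|].
- exact: mth.
- apply: (@int_tail d Omega R Pr (fun w => `|theta P a1 U sigma 0 w|%E)
           (rho R sigma (alpha P Plus) (alpha P Minus))) => //.
  by apply/andP; split; [exact: ltW | exact: r1].
- exists 1, (rho R sigma (alpha P Plus) (alpha P Minus)); split; first lra.
  split; first by apply/andP; split.
  by move=> n; rewrite mul1r; apply: tail.
Qed.
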